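(* Let $N\ge 1$, let $H\in\mathbb{C}^{N\times N}$ satisfy $H=H^\dagger=H^2$ (an orthogonal projector), let $|\psi_0\rangle\in\mathbb{C}^N$ be a unit vector and $\psi_0:=|\psi_0\rangle\langle\psi_0|$. Define $f:\mathrm{U}(N)\to\mathbb{R}$ by $f(U)=\operatorname{Tr}(HU\psi_0U^\dagger)$ and write $\psi_U:=U\psi_0U^\dagger$. Then the skew-Hermitian part of the Riemannian gradient of $f$ at $U$ is \[\widetilde{\operatorname{grad}} f(U)=[H,\psi_U]=H\psi_U-\psi_U H .\] Moreover, $\widetilde{\operatorname{grad}} f(U)=0$ if and only if $U$ is a global optimizer (global minimizer or global maximizer) of $f$ over $\mathrm{U}(N)$; and in that case $f(U)\in\{0,1\}$, where the value $0$ corresponds to the global minimum $0$ and the value $1$ to the global maximum $1$.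
   Context: $\mathrm{U}(N)=\{U\in\mathbb{C}^{N\times N}:U^\dagger U=I\}$ is regarded as a Riemannian submanifold of $\mathbb{C}^{N\times N}$ with the real inner product $\langle A,B\rangle=\operatorname{Re}\operatorname{Tr}(A^\dagger B)$ (the canonical metric induced by the Frobenius inner product). Its tangent space at $U$ is $\{\Omega U:\Omega^\dagger=-\Omega\}$. The Riemannian gradient $\operatorname{grad} f(U)$ is the unique tangent vector with $\langle \operatorname{grad} f(U),\xi\rangle=\mathrm{D}f(U)[\xi]$ for all tangent vectors $\xi$ at $U$; its skew-Hermitian part $\widetilde{\operatorname{grad}} f(U)$ is the unique skew-Hermitian matrix $\Omega$ with $\operatorname{grad} f(U)=\Omega U$. *)

(* Defs.v *)
From HB Require Import structures.
From mathcomp Require Import all_boot all_order all_algebra.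
From mathcomp Require Import all_classical all_reals all_analysis.
From mathcomp Require Import complex.
Set Implicit Arguments. Unset Strict Implicit. Unset Printing Implicit Defensive.
Import Order.TTheory GRing.Theory Num.Theory.
Local Open Scope ring_scope.



Definition adjmx (R : rcfType) (m n : nat) (A : 'M[R[i]]_(m, n)) : 'M[R[i]]_(n, m) :=
  (map_mx (@complex.conjc R) A)^T.

Definition ReC (R : rcfType) (z : R[i]) : R := complex.Re z.

Definition RtoC (R : rcfType) (t : R) : R[i] := complex.Complex t 0.

Definition is_unitary_mx (R : rcfType) (N : nat) (U : 'M[R[i]]_N) : Prop :=
  adjmx U *m U = 1%:M.

Definition is_hermitian_mx (R : rcfType) (N : nat) (A : 'M[R[i]]_N) : Prop :=
  adjmx A = A.

Definition is_skew_hermitian_mx (R : rcfType) (N : nat) (A : 'M[R[i]]_N) : Prop :=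
  adjmx A = - A.

Definition frob_inner (R : rcfType) (N : nat) (A B : 'M[R[i]]_N) : R :=
  ReC (\tr (adjmx A *m B)).

Definition is_tangent_UN (R : rcfType) (N : nat) (U xi : 'M[R[i]]_N) : Prop :=
  exists Om : 'M[R[i]]_N, is_skew_hermitian_mx Om /\ xi = Om *m U.

(* Df(U)[xi] = d: the directional derivative of (the smooth ambient
   extension of) f at U along xi equals d *)
Definition has_dir_deriv (R : realType) (N : nat) (f : 'M[R[i]]_N -> R)
    (U xi : 'M[R[i]]_N) (d : R) : Prop :=
  is_derive (0 : R) (1 : R) (fun t : R => f (U + RtoC t *: xi)) d.

Definition is_riem_grad (R : realType) (N : nat) (f : 'M[R[i]]_N -> R)
    (U G : 'M[R[i]]_N) : Prop :=
  is_tangent_UN U G /\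
  forall xi, is_tangent_UN U xi -> has_dir_deriv f U xi (frob_inner G xi).

Definition is_skew_grad (R : realType) (N : nat) (f : 'M[R[i]]_N -> R)
    (U Om : 'M[R[i]]_N) : Prop :=
  is_skew_hermitian_mx Om /\ is_riem_grad f U (Om *m U).

Definition costf (R : rcfType) (N : nat) (H psi0 : 'M[R[i]]_N) (U : 'M[R[i]]_N) : R :=
  ReC (\tr (H *m U *m psi0 *m adjmx U)).

(* Main.v *)
Require Import Defs.
From HB Require Import structures.
From mathcomp Require Import all_boot all_order all_algebra.
From mathcomp Require Import all_classical all_reals all_analysis.
From mathcomp Require Import complex.
From mathcomp Require Import ring lra.
Import Order.TTheory GRing.Theory Num.Theory.
Local Open Scope ring_scope.
Set Implicit Arguments. Unset Strict Implicit. Unset Printing Implicit Defensive.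
Lemma adjmxD (R : rcfType) m n (A B : 'M[R[i]]_(m,n)) : adjmx (A + B) = adjmx A + adjmx B.
Proof. by apply/matrixP=> i j; rewrite !mxE rmorphD. Qed.
Lemma adjmxN (R : rcfType) m n (A : 'M[R[i]]_(m,n)) : adjmx (- A) = - adjmx A.
Proof. by apply/matrixP=> i j; rewrite !mxE rmorphN. Qed.
Lemma adjmxB (R : rcfType) m n (A B : 'M[R[i]]_(m,n)) : adjmx (A - B) = adjmx A - adjmx B.
Proof. by rewrite adjmxD adjmxN. Qed.
Lemma adjmxM (R : rcfType) m n p (A : 'M[R[i]]_(m,n)) (B : 'M[R[i]]_(n,p)) :
  adjmx (A *m B) = adjmx B *m adjmx A.
Proof. by rewrite /adjmx map_mxM trmx_mul. Qed.
Lemma adjmxK (R : rcfType) m n (A : 'M[R[i]]_(m,n)) : adjmx (adjmx A) = A.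
Proof. by apply/matrixP=> i j; rewrite !mxE conjcK. Qed.
Lemma adjmxZ (R : rcfType) m n (a : R[i]) (A : 'M[R[i]]_(m,n)) :
  adjmx (a *: A) = (conjc a) *: adjmx A.
Proof. by apply/matrixP=> i j; rewrite !mxE rmorphM. Qed.
Lemma adjmx1 (R : rcfType) n : adjmx (1%:M : 'M[R[i]]_n) = 1%:M.
Proof. apply/matrixP=> i j; rewrite !mxE eq_sym; case: (i == j) => /=; by rewrite oppr0. Qed.
Lemma adjmx0 (R : rcfType) m n : adjmx (0 : 'M[R[i]]_(m,n)) = 0.
Proof. by apply/matrixP=> i j; rewrite !mxE conjc0. Qed.
Lemma tr_adjmx (R : rcfType) n (A : 'M[R[i]]_n) : \tr (adjmx A) = conjc (\tr A).
Proof. by rewrite /mxtrace rmorph_sum; apply: eq_bigr => i _; rewrite !mxE. Qed.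
Lemma ReC_conj (R : rcfType) (z : R[i]) : ReC (conjc z) = ReC z.
Proof. by case: z. Qed.
Lemma ReCD (R : rcfType) (z w : R[i]) : ReC (z + w) = ReC z + ReC w.
Proof. by case: z; case: w. Qed.
Lemma ReCN (R : rcfType) (z : R[i]) : ReC (- z) = - ReC z.
Proof. by case: z. Qed.
Lemma ReCB (R : rcfType) (z w : R[i]) : ReC (z - w) = ReC z - ReC w.
Proof. by rewrite ReCD ReCN. Qed.
Lemma ReC_RtoCM (R : rcfType) (t : R) (z : R[i]) : ReC (RtoC t * z) = t * ReC z.
Proof. by case: z => a b; rewrite /ReC /RtoC /= mul0r subr0. Qed.
Lemma ReC_RtoC (R : rcfType) (t : R) : ReC (RtoC t) = t.
Proof. by []. Qed.
Lemma conj_RtoC (R : rcfType) (t : R) : conjc (RtoC t) = RtoC t.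
Proof. by rewrite /RtoC /conjc oppr0. Qed.
Lemma ReC_sum (R : rcfType) (I : finType) (F : I -> R[i]) : ReC (\sum_i F i) = \sum_i ReC (F i).
Proof.
by rewrite (big_morph (@ReC R) (@ReCD R) (erefl : ReC (0 : R[i]) = 0)).
Qed.
Definition nsq (R : rcfType) m n (A : 'M[R[i]]_(m,n)) : R := ReC (\tr (adjmx A *m A)).
Lemma ReC_conjM (R : rcfType) (z : R[i]) : ReC (conjc z * z) = (complex.Re z)^+2 + (complex.Im z)^+2.
Proof. case: z => a b; rewrite /ReC /=. ring. Qed.
Lemma nsqE (R : rcfType) m n (A : 'M[R[i]]_(m,n)) :
  nsq A = \sum_j \sum_k ((complex.Re (A k j))^+2 + (complex.Im (A k j))^+2).
Proof.
rewrite /nsq /mxtrace ReC_sum; apply: eq_bigr => j _.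
rewrite mxE ReC_sum; apply: eq_bigr => k _.
by rewrite !mxE ReC_conjM.
Qed.
Lemma nsq_ge0 (R : rcfType) m n (A : 'M[R[i]]_(m,n)) : 0 <= nsq A.
Proof. rewrite nsqE; apply: sumr_ge0 => j _; apply: sumr_ge0 => k _; apply: addr_ge0; exact: sqr_ge0. Qed.
Lemma nsq_eq0 (R : rcfType) m n (A : 'M[R[i]]_(m,n)) : nsq A = 0 -> A = 0.
Proof.
rewrite nsqE => h; apply/matrixP => k j; rewrite mxE.
have h2 : \sum_k ((complex.Re (A k j))^+2 + (complex.Im (A k j))^+2) = 0.
  by apply: (psumr_eq0P _ h) => // i _; apply: sumr_ge0 => k' _; apply: addr_ge0; exact: sqr_ge0.
have h3 : (complex.Re (A k j))^+2 + (complex.Im (A k j))^+2 = 0.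
  by apply: (psumr_eq0P _ h2) => // i _; apply: addr_ge0; exact: sqr_ge0.
move: h3; case: (A k j) => a b /= /eqP.
rewrite paddr_eq0 ?sqr_ge0 // !sqrf_eq0 => /andP[/eqP -> /eqP ->] //.
Qed.
Lemma poly_aux (R : comRingType) (c x y z t : R) :
  c + t * x + (t * y + t * (t * z)) = c + t * (x + y) + t ^+ 2 * z.
Proof. ring. Qed.
Lemma dir_deriv_costf (R : realType) N (H P U xi : 'M[R[i]]_N) :
  has_dir_deriv (costf H P) U xi
    (ReC (\tr (H *m xi *m P *m adjmx U)) + ReC (\tr (H *m U *m P *m adjmx xi))).
Proof.
rewrite /has_dir_deriv.
set c := ReC (\tr (H *m U *m P *m adjmx U)).
set a := _ + _.
set b := ReC (\tr (H *m xi *m P *m adjmx xi)).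
have -> : (fun t : R => costf H P (U + RtoC t *: xi)) = (fun t : R => c + t * a + t ^+ 2 * b).
  apply: funext => t; rewrite /costf adjmxD adjmxZ conj_RtoC.
  rewrite !(mulmxDl, mulmxDr, mxtraceD, ReCD) /c /a /b.
  rewrite -!(scalemxAl, scalemxAr) !mxtraceZ !ReC_RtoCM; exact: poly_aux.
apply: is_derive_eq.
rewrite !(scaler0, scale0r, add0r, addr0, mul1r, expr0n) /=.
by rewrite ?scale0r ?addr0 ?mulr1 /GRing.scale /= ?mulr1 ?mul0r ?addr0.
Qed.
Lemma derive_uniq (R : realType) (f : R -> R) (x v d1 d2 : R) :
  is_derive x v f d1 -> is_derive x v f d2 -> d1 = d2.
Proof. by move=> h1 h2; rewrite -(@derive_val _ _ _ _ _ _ _ h1) -(@derive_val _ _ _ _ _ _ _ h2). Qed.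

Lemma unitary_r (R : rcfType) N (U : 'M[R[i]]_N) : is_unitary_mx U -> U *m adjmx U = 1%:M.
Proof. exact: mulmx1C. Qed.

Lemma trB (R : rcfType) N (A B : 'M[R[i]]_N) : \tr (A - B) = \tr A - \tr B.
Proof. exact: raddfB. Qed.
Lemma trN (R : rcfType) N (A : 'M[R[i]]_N) : \tr (- A) = - \tr A.
Proof. exact: raddfN. Qed.
Lemma deriv_tangent (R : rcfType) N (H P U Om : 'M[R[i]]_N) :
  is_skew_hermitian_mx Om ->
  ReC (\tr (H *m (Om *m U) *m P *m adjmx U)) + ReC (\tr (H *m U *m P *m adjmx (Om *m U)))
  = - ReC (\tr ((H *m (U *m P *m adjmx U) - (U *m P *m adjmx U) *m H) *m Om)).
Proof.
move=> hO; rewrite adjmxM hO.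
rewrite mulmxBl trB ReCB opprB addrC.
rewrite mulmxN mulmxN trN ReCN.
rewrite addrC; congr (_ + _); last by rewrite !mulmxA.
rewrite !mulmxA.
have -> : H *m Om *m U *m P *m adjmx U = (H *m Om) *m (U *m P *m adjmx U) by rewrite !mulmxA.
by rewrite mxtrace_mulC !mulmxA.
Qed.
Lemma frob_tangent (R : rcfType) N (U Om Om' : 'M[R[i]]_N) :
  is_unitary_mx U -> is_skew_hermitian_mx Om' ->
  frob_inner (Om' *m U) (Om *m U) = - ReC (\tr (Om' *m Om)).
Proof.
move=> hU hO; rewrite /frob_inner adjmxM hO mulmxN mulNmx trN ReCN.
have -> : adjmx U *m Om' *m (Om *m U) = adjmx U *m (Om' *m Om *m U) by rewrite !mulmxA.
by rewrite mxtrace_mulC -(mulmxA (Om' *m Om) U) (unitary_r hU) mulmx1.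
Qed.

Lemma herm_conj (R : rcfType) N (U P : 'M[R[i]]_N) :
  is_hermitian_mx P -> is_hermitian_mx (U *m P *m adjmx U).
Proof. by move=> hP; rewrite /is_hermitian_mx !adjmxM adjmxK hP mulmxA. Qed.

Lemma comm_skew (R : rcfType) N (H S : 'M[R[i]]_N) :
  is_hermitian_mx H -> is_hermitian_mx S -> is_skew_hermitian_mx (H *m S - S *m H).
Proof. by move=> hH hS; rewrite /is_skew_hermitian_mx adjmxB !adjmxM hH hS opprB. Qed.

Lemma skewB (R : rcfType) N (A B : 'M[R[i]]_N) :
  is_skew_hermitian_mx A -> is_skew_hermitian_mx B -> is_skew_hermitian_mx (A - B).
Proof. by move=> hA hB; rewrite /is_skew_hermitian_mx adjmxB hA hB opprB opprK addrC. Qed.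

Lemma part1 (R : realType) N (H P U : 'M[R[i]]_N) :
  is_hermitian_mx H -> is_hermitian_mx P -> is_unitary_mx U ->
  let psiU := U *m P *m adjmx U in
  forall Om, is_skew_grad (costf H P) U Om <-> Om = H *m psiU - psiU *m H.
Proof.
move=> hH hP hU psiU Om.
have hpsi : is_hermitian_mx psiU by exact: herm_conj.
have hC := comm_skew hH hpsi.
have key : forall X, is_skew_hermitian_mx X ->
    has_dir_deriv (costf H P) U (X *m U) (- ReC (\tr ((H *m psiU - psiU *m H) *m X))).
  by move=> X hX; rewrite -deriv_tangent //; exact: dir_deriv_costf.
split.
- case=> hO [_ hg].
  set C := H *m psiU - psiU *m H in hC key *.
  have hD := skewB hO hC.
  have h1 := hg ((Om - C) *m U) (ex_intro _ _ (conj hD erefl)).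
  rewrite frob_tangent // in h1.
  have e := derive_uniq h1 (key _ hD).
  have e2 : ReC (\tr ((Om - C) *m (Om - C))) = 0.
    by rewrite mulmxBl trB ReCB; apply/eqP; rewrite subr_eq0; apply/eqP; apply: oppr_inj.
  have : nsq (Om - C) = 0 by rewrite /nsq hD mulNmx trN ReCN e2 oppr0.
  by move/nsq_eq0/eqP; rewrite subr_eq0 => /eqP.
- move=> ->; split => //; split; first by exists (H *m psiU - psiU *m H).
  move=> xi [X [hX ->]]; rewrite frob_tangent //; exact: key.
Qed.
Lemma herm11 (R : rcfType) (M : 'M[R[i]]_1) : adjmx M = M -> conjc (M 0 0) = M 0 0.
Proof. by move=> h; rewrite -[in RHS]h !mxE. Qed.

Lemma herm_real (R : rcfType) (z : R[i]) : conjc z = z -> z = RtoC (ReC z).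
Proof.
case: z => a b /= [] h; rewrite /RtoC /ReC /=; congr (Complex _ _).
lra.
Qed.

Lemma reach (R : rcfType) N (w z : 'cV[R[i]]_N) :
  adjmx w *m w = 1%:M -> adjmx z *m z = 1%:M -> adjmx w *m z = adjmx z *m w ->
  exists W : 'M[R[i]]_N, is_unitary_mx W /\ W *m w = z.
Proof.
move=> hw hz hwz.
have [->|nwz] := eqVneq w z; first by exists 1%:M; split; rewrite /is_unitary_mx ?adjmx1 mul1mx.
set x := w - z.
have xn0 : x != 0 by rewrite subr_eq0.
set k := (adjmx x *m x) 0 0.
have hk : adjmx (adjmx x *m x) = adjmx x *m x by rewrite adjmxM adjmxK.
have kr : conjc k = k by apply: herm11.
have kn0 : k != 0.
  apply/eqP => k0; move/eqP: xn0; apply; apply: nsq_eq0.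
  by rewrite /nsq /mxtrace big_ord1 -/k k0.
have e2 : 2%:R *: (adjmx x *m w) = adjmx x *m x.
  rewrite /x adjmxB !(mulmxBl, mulmxBr) hw hz hwz; rewrite scaler_nat mulr2n.
  by rewrite opprB.
set a := 2%:R / k.
have ar : conjc a = a.
  by rewrite /a fmorph_div rmorph_nat; congr (_ / _); exact: kr.
set X := x *m adjmx x.
have hX : adjmx X = X by rewrite /X adjmxM adjmxK.
have XX : X *m X = k *: X.
  by rewrite /X mulmxA -(mulmxA x) [adjmx x *m x]mx11_scalar mul_mx_scalar -scalemxAl.
exists (1%:M - a *: X); split.
  rewrite /is_unitary_mx adjmxB adjmx1 adjmxZ ar hX.
  rewrite !(mulmxBl, mulmxBr, mul1mx, mulmx1) -!scalemxAl -!scalemxAr XX scalerA.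
  have hh : a * a * k = a + a by rewrite /a; field.
  by rewrite scalerA hh scalerDl opprB addrK subrK.
rewrite mulmxBl mul1mx -scalemxAl /X -mulmxA.
have e3 : 2%:R * (adjmx x *m w) 0 0 = k.
  by rewrite /k -e2 [in RHS]mxE.
rewrite [adjmx x *m w]mx11_scalar mul_mx_scalar scalerA.
have -> : a * (adjmx x *m w) 0 0 = 1 by rewrite /a -e3; field; rewrite -e3 in kn0; move: kn0; rewrite mulf_eq0 negb_or => /andP[].
by rewrite scale1r /x opprB addrC subrK.
Qed.
Lemma tr11 (R : rcfType) (M : 'M[R[i]]_1) : \tr M = M 0 0.
Proof. by rewrite /mxtrace big_ord1. Qed.

Lemma nsq_proj (R : rcfType) N (K : 'M[R[i]]_N) (z : 'cV[R[i]]_N) :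
  is_hermitian_mx K -> K *m K = K -> nsq (K *m z) = ReC (\tr (adjmx z *m K *m z)).
Proof. by move=> hK hKK; rewrite /nsq adjmxM hK !mulmxA -(mulmxA _ K K) hKK. Qed.

Lemma costf_vec (R : rcfType) N (H V : 'M[R[i]]_N) (v : 'cV[R[i]]_N) :
  is_hermitian_mx H -> H *m H = H -> costf H (v *m adjmx v) V = nsq (H *m (V *m v)).
Proof.
move=> hH hHH; rewrite nsq_proj // /costf.
have -> : H *m V *m (v *m adjmx v) *m adjmx V = (H *m (V *m v)) *m adjmx (V *m v).
  by rewrite adjmxM !mulmxA.
by rewrite (mxtrace_mulC (H *m (V *m v))) (mulmxA (adjmx (V *m v))).
Qed.

Lemma compl_herm (R : rcfType) N (H : 'M[R[i]]_N) :
  is_hermitian_mx H -> is_hermitian_mx (1%:M - H).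
Proof. by move=> hH; rewrite /is_hermitian_mx adjmxB adjmx1 hH. Qed.

Lemma compl_idem (R : rcfType) N (H : 'M[R[i]]_N) :
  H *m H = H -> (1%:M - H) *m (1%:M - H) = 1%:M - H.
Proof. by move=> hHH; rewrite mulmxBl !mulmxBr !mul1mx mulmx1 hHH subrr subr0. Qed.

Lemma nsq_compl (R : rcfType) N (H : 'M[R[i]]_N) (z : 'cV[R[i]]_N) :
  is_hermitian_mx H -> H *m H = H -> adjmx z *m z = 1%:M ->
  nsq ((1%:M - H) *m z) = 1 - nsq (H *m z).
Proof.
move=> hH hHH hz; rewrite (nsq_proj _ (compl_herm hH) (compl_idem hHH)) (nsq_proj _ hH hHH).
by rewrite mulmxBr mulmx1 mulmxBl hz trB ReCB mxtrace1.
Qed.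

Lemma comm0 (R : rcfType) N (H : 'M[R[i]]_N) (w : 'cV[R[i]]_N) :
  is_hermitian_mx H -> (H *m w = w \/ H *m w = 0) ->
  H *m (w *m adjmx w) - w *m adjmx w *m H = 0.
Proof.
move=> hH hw.
have e : w *m adjmx w *m H = w *m adjmx (H *m w) by rewrite adjmxM hH mulmxA.
rewrite e mulmxA; case: hw => ->; first by rewrite subrr.
by rewrite adjmx0 mulmx0 mul0mx subrr.
Qed.
Lemma comm_val (R : rcfType) N (H : 'M[R[i]]_N) (w : 'cV[R[i]]_N) :
  is_hermitian_mx H -> H *m H = H -> adjmx w *m w = 1%:M ->
  H *m (w *m adjmx w) - w *m adjmx w *m H = 0 ->
  nsq (H *m w) = 0 \/ nsq (H *m w) = 1.
Proof.
move=> hH hHH hw /eqP; rewrite subr_eq0 => /eqP hc.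
set l := (adjmx w *m H *m w) 0 0.
have e1 : H *m w = l *: w.
  rewrite -[H *m w]mulmx1 -hw !mulmxA -(mulmxA H) hc -!mulmxA (mulmxA (adjmx w)).
  by rewrite [adjmx w *m H *m w]mx11_scalar mul_mx_scalar.
have e2 : l * l = l.
  have : (l * l) *: w = l *: w by rewrite -scalerA -e1 scalemxAr -e1 mulmxA hHH.
  move/(congr1 (mulmx (adjmx w))); rewrite -!scalemxAr hw => /matrixP /(_ 0 0).
  by rewrite !mxE eqxx !mulr1.
have : l = 0 \/ l = 1.
  have : l * (l - 1) = 0 by rewrite mulrBr mulr1 e2 subrr.
  by move/eqP; rewrite mulf_eq0 subr_eq0 => /orP[] /eqP; [left|right].
by rewrite nsq_proj // tr11 -/l => -[] ->; [left|right].
Qed.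
Lemma RtoCE (R : rcfType) (t : R) : RtoC t = (t%:C)%C.
Proof. by []. Qed.

Lemma gram11 (R : rcfType) N (y : 'cV[R[i]]_N) : adjmx y *m y = (RtoC (nsq y))%:M.
Proof.
rewrite [LHS]mx11_scalar; congr (_%:M).
rewrite /nsq tr11; apply: herm_real; apply: herm11.
by rewrite adjmxM adjmxK.
Qed.

Lemma normalize (R : rcfType) N (K : 'M[R[i]]_N) (w : 'cV[R[i]]_N) :
  is_hermitian_mx K -> K *m K = K -> K *m w != 0 ->
  let z := RtoC ((Num.sqrt (nsq (K *m w)))^-1) *: (K *m w) in
  [/\ adjmx z *m z = 1%:M, adjmx w *m z = adjmx z *m w & K *m z = z].
Proof.
move=> hK hKK yn0 z.
set y := K *m w in yn0 z *.
set r := Num.sqrt (nsq y).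
have s0 : 0 < nsq y.
  rewrite lt_def nsq_ge0 andbT; apply/eqP => e; move/eqP: yn0; apply; exact: nsq_eq0.
have r0 : r != 0 by rewrite /r sqrtr_eq0 -ltNge.
have rr : r * r = nsq y by rewrite -expr2 sqr_sqrtr // ltW.
split.
- rewrite /z adjmxZ conj_RtoC -scalemxAl -scalemxAr scalerA gram11 scale_scalar_mx.
  rewrite !RtoCE -!rmorphM /= -/r.
  have -> : r^-1 / r * nsq y = 1 by rewrite -rr; field.
  by rewrite rmorph1.
- rewrite /z adjmxZ conj_RtoC -scalemxAl -scalemxAr; congr (_ *: _).
  by rewrite /y adjmxM hK mulmxA.
- by rewrite /z -scalemxAr /y mulmxA hKK.
Qed.

Lemma exists_V (R : rcfType) N (U : 'M[R[i]]_N) (v z : 'cV[R[i]]_N) :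
  is_unitary_mx U -> adjmx (U *m v) *m (U *m v) = 1%:M -> adjmx z *m z = 1%:M ->
  adjmx (U *m v) *m z = adjmx z *m (U *m v) ->
  exists V, is_unitary_mx V /\ V *m v = z.
Proof.
move=> hU hw hz hwz; have [W [hW e]] := reach hw hz hwz.
exists (W *m U); split; last by rewrite -mulmxA.
by rewrite /is_unitary_mx adjmxM mulmxA -(mulmxA _ _ W) hW mulmx1 hU.
Qed.
Theorem theorem4p1 (R : realType) (N : nat) (HN : (0 < N)%N)
    (H : 'M[R[i]]_N) (v : 'cV[R[i]]_N)
    (HH : is_hermitian_mx H) (HP : H *m H = H)
    (Hv : adjmx v *m v = 1%:M) :
  let psi0 := v *m adjmx v in
  let f := costf H psi0 in
  forall U : 'M[R[i]]_N, is_unitary_mx U ->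
  let psiU := U *m psi0 *m adjmx U in
  (forall Om : 'M[R[i]]_N, is_skew_grad f U Om <-> Om = H *m psiU - psiU *m H) /\
  (H *m psiU - psiU *m H = 0 <->
     ((forall V : 'M[R[i]]_N, is_unitary_mx V -> f U <= f V) \/
      (forall V : 'M[R[i]]_N, is_unitary_mx V -> f V <= f U))) /\
  (H *m psiU - psiU *m H = 0 ->
     [/\ f U = 0 \/ f U = 1,
         f U = 0 -> forall V : 'M[R[i]]_N, is_unitary_mx V -> f U <= f V
       & f U = 1 -> forall V : 'M[R[i]]_N, is_unitary_mx V -> f V <= f U]).
Proof.
move=> psi0 f U hU psiU.
have hP : is_hermitian_mx psi0 by rewrite /is_hermitian_mx /psi0 adjmxM adjmxK.
split; first exact: part1.
have unitV : forall V, is_unitary_mx V -> adjmx (V *m v) *m (V *m v) = 1%:M.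
  by move=> V hV; rewrite adjmxM mulmxA -(mulmxA _ (adjmx V)) hV mulmx1 Hv.
set w := U *m v.
have hw : adjmx w *m w = 1%:M by exact: unitV.
have epsi : psiU = w *m adjmx w by rewrite /psiU /psi0 /w adjmxM !mulmxA.
have fV : forall V, f V = nsq (H *m (V *m v)) by move=> V; exact: costf_vec.
have lo : forall V, is_unitary_mx V -> 0 <= f V by move=> V _; rewrite fV nsq_ge0.
have hi : forall V, is_unitary_mx V -> f V <= 1.
  move=> V hV; rewrite fV -subr_ge0 -nsq_compl //; [exact: nsq_ge0 | exact: unitV].
have hG : (1%:M - H) *m w = 0 -> H *m w = w.
  by move/eqP; rewrite mulmxBl mul1mx subr_eq0 => /eqP.
have p3 : H *m psiU - psiU *m H = 0 -> f U = 0 \/ f U = 1.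
  by rewrite epsi fV -/w; exact: comm_val.
split; last first.
  move=> hc; split; first exact: p3 hc.
  - by move=> -> V hV; exact: lo.
  - by move=> -> V hV; exact: hi.
split.
  move=> hc; case: (p3 hc) => e; [left|right] => V hV; rewrite e; [exact: lo | exact: hi].
rewrite epsi; case=> hopt.
- have [hy|hy] := eqVneq ((1%:M - H) *m w) 0; first by apply: comm0 => //; left; exact: hG.
  have [hz1 hz2 hz3] := normalize (compl_herm HH) (compl_idem HP) hy.
  set z := _ *: _ in hz1 hz2 hz3.
  have [V [hV eV]] := exists_V hU hw hz1 hz2.
  have fV0 : f V = 0.
    by rewrite fV eV -hz3 mulmxA mulmxBr mulmx1 HP subrr mul0mx /nsq adjmx0 mul0mx mxtrace0.
  have := hopt V hV; rewrite fV0 fV -/w => hle.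
  have e0 : nsq (H *m w) = 0 by apply/eqP; rewrite eq_le hle nsq_ge0.
  by apply: comm0 => //; right; exact: nsq_eq0.
- have [hy|hy] := eqVneq (H *m w) 0; first by apply: comm0 => //; right.
  have [hz1 hz2 hz3] := normalize HH HP hy.
  set z := _ *: _ in hz1 hz2 hz3.
  have [V [hV eV]] := exists_V hU hw hz1 hz2.
  have fV1 : f V = 1.
    by rewrite fV eV hz3 /nsq hz1 mxtrace1.
  have := hopt V hV; rewrite fV1 fV -/w => hle.
  have e0 : nsq ((1%:M - H) *m w) = 0.
    by apply/eqP; rewrite eq_le nsq_ge0 andbT nsq_compl // subr_le0.
  by apply: comm0 => //; left; apply: hG; exact: nsq_eq0.
Qed.
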